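(* In the setting described in the context, the Sarovar–Milburn bound $F_M(\theta)\le C_\Upsilon(\theta)$ can be attained (i.e. there is a POVM $\{M_m\}$ with $F_M(\theta)=C_\Upsilon(\theta)$) only for channels satisfying $\langle w_j'(\theta)|w_k(\theta)\rangle=0$ for all $j,k$ with $p_j(\theta),p_k(\theta)>0$.
   Context: A one-parameter quantum channel is a map $\rho_0\mapsto\sum_k E_k(\theta)\rho_0E_k(\theta)^\dagger$ on density matrices on $\mathbb{C}^d$, with Kraus operators depending differentiably on real $\theta$ and $\sum_k E_k^\dagger E_k=I$. The input is a fixed pure state $\rho_0=|\psi_0\rangle\langle\psi_0|$. Canonical Kraus operators $\{\Upsilon_k(\theta)\}_{k=1}^d$: a differentiable Kraus representation of the same channel with $\mathrm{tr}\{\Upsilon_k\rho_0\Upsilon_j^\dagger\}=\delta_{jk}p_k(\theta)$. The output state is $\rho_{out}(\theta)=\sum_k p_k(\theta)|w_k(\theta)\rangle\langle w_k(\theta)|$, with $\{|w_k(\theta)\rangle\}$ an orthonormal basis differentiable in $\theta$ and $|w_k\rangle=p_k^{-1/2}\Upsilon_k|\psi_0\rangle$ when $p_k>0$. A prime denotes $d/d\theta$. $C_\Upsilon(\theta)=4\sum_k\mathrm{tr}\{\Upsilon_k'\rho_0\Upsilon_k'^\dagger\}$. For a POVM $\{M_m\}$ (Hermitian, nonnegative, summing to $I$), let $p_m(\theta)=\mathrm{tr}\{\rho_{out}(\theta)M_m\}$; the Fisher information is $F_M(\theta)=\sum_m p_m(\theta)^{-1}(p_m'(\theta))^2$ (sum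 over $m$ with $p_m>0$). *)

(* Defs.v *)
From HB Require Import structures.
From mathcomp Require Import all_boot all_order all_algebra.
From mathcomp Require Import complex.
From mathcomp Require Import all_classical all_reals all_analysis.
Set Implicit Arguments. Unset Strict Implicit. Unset Printing Implicit Defensive.
Import Order.TTheory GRing.Theory Num.Theory.
Local Open Scope ring_scope.
Local Open Scope complex_scope.

Section QDefs.
Variable R : realType.
Local Notation C := (R[i]).

Definition adj m n (A : 'M[C]_(m, n)) : 'M[C]_(n, m) := (map_mx (@conjc R) A)^T.

(** positive semidefinite (over C this forces Hermitian; we add it anyway
    where the paper says "Hermitian") *)
Definition hermitian n (A : 'M[C]_n) := adj A = A.
Definition psd n (A : 'M[C]_n) :=
  forall v : 'cV[C]_n, 0 <= (adj v *m A *m v) 0 0.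
Definition density n (rho : 'M[C]_n) := hermitian rho /\ psd rho /\ \tr rho = 1.

Definition mx_derivable m n (f : R -> 'M[C]_(m, n)) (t : R) :=
  forall i j, derivable (fun s => complex.Re (f s i j)) t 1 /\
              derivable (fun s => complex.Im (f s i j)) t 1.
Definition mx_derive m n (f : R -> 'M[C]_(m, n)) (t : R) : 'M[C]_(m, n) :=
  \matrix_(i, j) (derive1 (fun s => complex.Re (f s i j)) t +i* derive1 (fun s => complex.Im (f s i j)) t).

Definition kraus_apply n (I : finType) (E : I -> 'M[C]_n) (rho : 'M[C]_n) :=
  \sum_(k : I) E k *m rho *m adj (E k).
Definition trace_preserving n (I : finType) (E : I -> 'M[C]_n) :=
  \sum_(k : I) adj (E k) *m E k = 1%:M.

Definition povm n (I : finType) (M : I -> 'M[C]_n) :=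
  (forall m, hermitian (M m) /\ psd (M m)) /\ \sum_(m : I) M m = 1%:M.

Definition outcome_prob n (rho_out : R -> 'M[C]_n) (I : finType)
  (M : I -> 'M[C]_n) (m : I) (t : R) : R := complex.Re (\tr (rho_out t *m M m)).
Definition fisher_info n (rho_out : R -> 'M[C]_n) (I : finType)
  (M : I -> 'M[C]_n) (t : R) : R :=
  \sum_(m : I | 0 < outcome_prob rho_out M m t)
     (outcome_prob rho_out M m t)^-1 *
     (derive1 (outcome_prob rho_out M m) t) ^+ 2.

Definition C_Ups n (I : finType) (Ups : R -> I -> 'M[C]_n) (rho0 : 'M[C]_n)
  (t : R) : R :=
  4 * \sum_(k : I) complex.Re (\tr (mx_derive (fun s => Ups s k) t *m rho0 *m
                              adj (mx_derive (fun s => Ups s k) t))).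

End QDefs.

(* Main.v *)
Require Import Defs.
From HB Require Import structures.
From mathcomp Require Import all_boot all_order all_algebra.
From mathcomp Require Import complex.
From mathcomp Require Import all_classical all_reals all_analysis.
Import Order.TTheory GRing.Theory Num.Theory.
Local Open Scope ring_scope.
Local Open Scope complex_scope.

From mathcomp Require Import ring lra.

Module QA.
Set Implicit Arguments. Unset Strict Implicit.
Section Calc.
Variable R : realType.
Local Notation C := (R[i]).
Local Notation Re := (@complex.Re R).
Local Notation Im := (@complex.Im R).

Definition cder (f : R -> C) (t : R) (df : C) :=
  is_derive t 1 (fun s => Re (f s)) (Re df) /\
  is_derive t 1 (fun s => Im (f s)) (Im df).

Lemma cReD (a b : C) : Re (a + b) = Re a + Re b. Proof. by case: a; case: b. Qed.
Lemma cImD (a b : C) : Im (a + b) = Im a + Im b. Proof. by case: a; case: b. Qed.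
Lemma cReM (a b : C) : Re (a * b) = Re a * Re b - Im a * Im b.
Proof. by case: a; case: b. Qed.
Lemma cImM (a b : C) : Im (a * b) = Re a * Im b + Im a * Re b.
Proof. by case: a => a1 a2; case: b => b1 b2 /=; rewrite addrC. Qed.
Lemma cReJ (a : C) : Re (conjc a) = Re a. Proof. by case: a. Qed.
Lemma cImJ (a : C) : Im (conjc a) = - Im a. Proof. by case: a. Qed.
Lemma cReN (a : C) : Re (- a) = - Re a. Proof. by case: a. Qed.
Lemma cImN (a : C) : Im (- a) = - Im a. Proof. by case: a. Qed.
Lemma cconjC (x : R) : conjc (x%:C) = x%:C.
Proof. by rewrite /= oppr0. Qed.
Lemma cRe0 : Re 0 = 0. Proof. by []. Qed.
Lemma cIm0 : Im 0 = 0. Proof. by []. Qed.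
Lemma cReC (x : R) : Re x%:C = x. Proof. by []. Qed.
Lemma cImC (x : R) : Im x%:C = 0. Proof. by []. Qed.

Lemma cRe_sum (I : finType) (P : pred I) (F : I -> C) :
  Re (\sum_(i | P i) F i) = \sum_(i | P i) Re (F i).
Proof. exact: (big_morph _ cReD cRe0). Qed.
Lemma cIm_sum (I : finType) (P : pred I) (F : I -> C) :
  Im (\sum_(i | P i) F i) = \sum_(i | P i) Im (F i).
Proof. exact: (big_morph _ cImD cIm0). Qed.

Lemma cder_ext f g t df : (forall s, f s = g s) -> cder f t df -> cder g t df.
Proof.
by move=> fg; have -> : g = f by apply: funext => s; rewrite fg.
Qed.

Lemma cder_uniq f t df df' : cder f t df -> cder f t df' -> df = df'.
Proof.
move=> [h1 h2] [h3 h4].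
have e1 : Re df = Re df' by rewrite -(@derive_val _ _ _ _ _ _ _ h1) -(@derive_val _ _ _ _ _ _ _ h3).
have e2 : Im df = Im df' by rewrite -(@derive_val _ _ _ _ _ _ _ h2) -(@derive_val _ _ _ _ _ _ _ h4).
move: e1 e2; clear; case: df; case: df' => ? ? ? ? /= -> -> //.
Qed.

Lemma cder_cst (c : C) t : cder (fun _ => c) t 0.
Proof. by split; apply: is_derive_cst. Qed.

Lemma cder_add f g t df dg : cder f t df -> cder g t dg ->
  cder (fun s => f s + g s) t (df + dg).
Proof.
move=> [f1 f2] [g1 g2]; split.
  rewrite cReD; have -> : (fun s => Re (f s + g s)) = (fun s => Re (f s)) + (fun s => Re (g s)).
    by apply: funext => s; rewrite cReD.
  exact: is_deriveD.
rewrite cImD; have -> : (fun s => Im (f s + g s)) = (fun s => Im (f s)) + (fun s => Im (g s)).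
  by apply: funext => s; rewrite cImD.
exact: is_deriveD.
Qed.

Lemma cder_opp f t df : cder f t df -> cder (fun s => - f s) t (- df).
Proof.
move=> [f1 f2]; split.
  have -> : (fun s => Re (- f s)) = - (fun s => Re (f s)).
    by apply: funext => s; rewrite cReN.
  by rewrite cReN; apply: is_deriveN.
have -> : (fun s => Im (- f s)) = - (fun s => Im (f s)).
  by apply: funext => s; rewrite cImN.
by rewrite cImN; apply: is_deriveN.
Qed.

Lemma cder_mul f g t df dg : cder f t df -> cder g t dg ->
  cder (fun s => f s * g s) t (df * g t + f t * dg).
Proof.
move=> [f1 f2] [g1 g2]; split.
  have -> : (fun s => Re (f s * g s)) = (fun s => Re (f s)) * (fun s => Re (g s))
       - (fun s => Im (f s)) * (fun s => Im (g s)).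
    by apply: funext => s; rewrite cReM.
  have H1 := is_deriveM f1 g1. have H2 := is_deriveM f2 g2.
  apply: (is_derive_eq (is_deriveB H1 H2)).
  rewrite cReD !cReM /= -![_ *: _]/(_ * _). lra.
have -> : (fun s => Im (f s * g s)) = (fun s => Re (f s)) * (fun s => Im (g s))
     + (fun s => Im (f s)) * (fun s => Re (g s)).
  by apply: funext => s; rewrite cImM.
apply: (is_derive_eq (is_deriveD (is_deriveM f1 g2) (is_deriveM f2 g1))).
rewrite cImD !cImM /= -![_ *: _]/(_ * _). lra.
Qed.

Lemma cder_conj f t df : cder f t df -> cder (fun s => conjc (f s)) t (conjc df).
Proof.
move=> [f1 f2]; split.
  have -> : (fun s => Re (conjc (f s))) = (fun s => Re (f s)).
    by apply: funext => s; rewrite cReJ.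
  by rewrite cReJ.
have -> : (fun s => Im (conjc (f s))) = - (fun s => Im (f s)).
  by apply: funext => s; rewrite cImJ.
by rewrite cImJ; apply: is_deriveN.
Qed.

Lemma cder_sum n (F : 'I_n -> R -> C) t (dF : 'I_n -> C) :
  (forall i, cder (F i) t (dF i)) ->
  cder (fun s => \sum_(i < n) F i s) t (\sum_(i < n) dF i).
Proof.
elim: n F dF => [|n IH] F dF h.
  apply: (@cder_ext (fun _ : R => (0 : C))) => [s|]; first by rewrite big_ord0.
  by rewrite big_ord0; apply: cder_cst.
apply: (@cder_ext (fun s => F ord0 s + \sum_(i < n) F (lift ord0 i) s)).
  by move=> s; rewrite big_ord_recl.
rewrite big_ord_recl; apply: cder_add => //.
by apply: IH => i.
Qed.

Lemma cder_Re f t df : cder f t df -> cder (fun s => (Re (f s))%:C) t (Re df)%:C.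
Proof. by move=> [f1 f2]; split => //=; apply: is_derive_cst. Qed.

Lemma cder_derivable (f : R -> C) (t : R) : derivable (fun s => Re (f s)) t 1 ->
  derivable (fun s => Im (f s)) t 1 ->
  cder f t (derive1 (fun s => Re (f s)) t +i* derive1 (fun s => Im (f s)) t).
Proof.
by move=> h1 h2; split => /=; rewrite derive1E; apply: derivableP.
Qed.


Definition mder m n (A : R -> 'M[C]_(m, n)) (t : R) (dA : 'M[C]_(m, n)) :=
  forall i j, cder (fun s => A s i j) t (dA i j).

Lemma mder_ext m n (A B : R -> 'M[C]_(m, n)) t dA :
  (forall s, A s = B s) -> mder A t dA -> mder B t dA.
Proof. by move=> AB h i j; apply: (cder_ext _ (h i j)) => s; rewrite AB. Qed.

Lemma mder_uniq m n (A : R -> 'M[C]_(m, n)) t dA dA' :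
  mder A t dA -> mder A t dA' -> dA = dA'.
Proof. by move=> h1 h2; apply/matrixP => i j; apply: cder_uniq (h1 i j) (h2 i j). Qed.

Lemma mder_cst m n (A : 'M[C]_(m, n)) t : mder (fun _ => A) t 0.
Proof. by move=> i j; rewrite mxE; apply: cder_cst. Qed.

Lemma mder_add m n (A B : R -> 'M[C]_(m, n)) t dA dB :
  mder A t dA -> mder B t dB -> mder (fun s => A s + B s) t (dA + dB).
Proof.
move=> hA hB i j; rewrite mxE.
by apply: (cder_ext _ (cder_add (hA i j) (hB i j))) => s; rewrite mxE.
Qed.

Lemma mder_opp m n (A : R -> 'M[C]_(m, n)) t dA :
  mder A t dA -> mder (fun s => - A s) t (- dA).
Proof.
move=> hA i j; rewrite mxE.
by apply: (cder_ext _ (cder_opp (hA i j))) => s; rewrite mxE.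
Qed.

Lemma mder_sum m n k (F : 'I_k -> R -> 'M[C]_(m, n)) t dF :
  (forall l, mder (F l) t (dF l)) ->
  mder (fun s => \sum_(l < k) F l s) t (\sum_(l < k) dF l).
Proof.
move=> h i j; rewrite summxE.
apply: (cder_ext _ (cder_sum (fun l => h l i j))) => s.
by rewrite summxE.
Qed.

Lemma mder_mul m n p (A : R -> 'M[C]_(m, n)) (B : R -> 'M[C]_(n, p)) t dA dB :
  mder A t dA -> mder B t dB ->
  mder (fun s => A s *m B s) t (dA *m B t + A t *m dB).
Proof.
move=> hA hB i j; rewrite !mxE.
have -> : \sum_j0 dA i j0 * B t j0 j + \sum_j0 A t i j0 * dB j0 j =
  \sum_j0 (dA i j0 * B t j0 j + A t i j0 * dB j0 j) by rewrite big_split.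
apply: (cder_ext _ (cder_sum (fun l => cder_mul (hA i l) (hB l j)))) => s.
by rewrite mxE.
Qed.

Lemma mder_scale m n (c : R -> C) (A : R -> 'M[C]_(m, n)) t dc dA :
  cder c t dc -> mder A t dA ->
  mder (fun s => c s *: A s) t (dc *: A t + c t *: dA).
Proof.
move=> hc hA i j; rewrite !mxE.
by apply: (cder_ext _ (cder_mul hc (hA i j))) => s; rewrite mxE.
Qed.

Lemma mder_adj m n (A : R -> 'M[C]_(m, n)) t dA :
  mder A t dA -> mder (fun s => adj (A s)) t (adj dA).
Proof.
move=> hA i j; rewrite /adj !mxE.
by apply: (cder_ext _ (cder_conj (hA j i))) => s; rewrite !mxE.
Qed.

Lemma cder_tr n (A : R -> 'M[C]_n) t dA :
  mder A t dA -> cder (fun s => \tr (A s)) t (\tr dA).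
Proof. by move=> hA; apply: cder_sum => i; apply: hA. Qed.

Lemma mder_derivable m n (A : R -> 'M[C]_(m, n)) t :
  mx_derivable A t -> mder A t (mx_derive A t).
Proof.
move=> h i j; rewrite mxE; case: (h i j) => h1 h2.
exact: cder_derivable.
Qed.

Lemma qadjE m n (A : 'M[C]_(m, n)) i j : adj A i j = conjc (A j i).
Proof. by rewrite /adj !mxE. Qed.

Lemma qadjM m n p (A : 'M[C]_(m, n)) (B : 'M[C]_(n, p)) :
  adj (A *m B) = adj B *m adj A.
Proof. by rewrite /adj map_mxM trmx_mul. Qed.

Lemma qadjK m n (A : 'M[C]_(m, n)) : adj (adj A) = A.
Proof. by apply/matrixP => i j; rewrite !qadjE conjcK. Qed.

Lemma qadjD m n (A B : 'M[C]_(m, n)) : adj (A + B) = adj A + adj B.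
Proof. by apply/matrixP => i j; rewrite !qadjE !mxE rmorphD. Qed.

Lemma qadjN m n (A : 'M[C]_(m, n)) : adj (- A) = - adj A.
Proof. by apply/matrixP => i j; rewrite !qadjE !mxE rmorphN. Qed.

Lemma qadjZ m n (c : C) (A : 'M[C]_(m, n)) : adj (c *: A) = conjc c *: adj A.
Proof. by apply/matrixP => i j; rewrite !qadjE !mxE rmorphM. Qed.

Lemma qadj_sum m n k (F : 'I_k -> 'M[C]_(m, n)) :
  adj (\sum_(l < k) F l) = \sum_(l < k) adj (F l).
Proof.
by apply/matrixP => i j; rewrite qadjE !summxE rmorph_sum; apply: eq_bigr => l _; rewrite qadjE.
Qed.

Lemma qadj0 m n : adj (0 : 'M[C]_(m, n)) = 0.
Proof. by apply/matrixP => i j; rewrite qadjE !mxE conjc0. Qed.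

Lemma qadj_scalar1 (c : C) : adj (c%:M : 'M[C]_1) = (conjc c)%:M.
Proof. by apply/matrixP => i j; rewrite qadjE !mxE !ord1 eqxx /= mulr1n. Qed.

Lemma conj_entry m n (A : 'M[C]_(m, n)) i j : conjc (A i j) = adj A j i.
Proof. by rewrite qadjE. Qed.

End Calc.

End QA.
Import QA.

Module QB.
Set Implicit Arguments. Unset Strict Implicit.
Section Alg.
Variable R : realType.
Local Notation C := (R[i]).
Local Notation Re := (@complex.Re R).
Local Notation Im := (@complex.Im R).
Variable d : nat.
Implicit Types (x y z u v : 'I_d -> 'cV[C]_d) (G : 'M[C]_d).

Definition Bf G x y : C := \sum_(k < d) (adj (x k) *m G *m y k) 0 0.

Lemma entry_conj1 n (a : 'cV[C]_n) (G : 'M[C]_n) (b : 'cV[C]_n) : Defs.hermitian G ->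
  conjc ((adj a *m G *m b) 0 0) = (adj b *m G *m a) 0 0.
Proof.
move=> hG; rewrite conj_entry !qadjM qadjK hG; by rewrite mulmxA.
Qed.

Lemma entry_conj0 n (a b : 'cV[C]_n) :
  conjc ((adj a *m b) 0 0) = (adj b *m a) 0 0.
Proof. by rewrite conj_entry !qadjM qadjK. Qed.

Lemma Bf_conj G x y : Defs.hermitian G -> conjc (Bf G x y) = Bf G y x.
Proof.
move=> hG; rewrite /Bf rmorph_sum; apply: eq_bigr => k _.
exact: entry_conj1.
Qed.

Lemma Re_conj (a : C) : Re (conjc a) = Re a. Proof. by case: a. Qed.

Lemma Re_Bf_sym G x y : Defs.hermitian G -> Re (Bf G x y) = Re (Bf G y x).
Proof. by move=> hG; rewrite -(Bf_conj _ _ hG) Re_conj. Qed.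

Lemma Bf_ge0 G x : Defs.psd G -> 0 <= Bf G x x.
Proof. by move=> hG; apply: sumr_ge0 => k _; apply: hG. Qed.

Lemma Re_ge0 (a : C) : 0 <= a -> 0 <= Re a.
Proof. by rewrite lecE => /andP[_]. Qed.

Lemma Bf_addl G x z y (c : C) :
  Bf G (fun k => x k + c *: z k) y = Bf G x y + conjc c * Bf G z y.
Proof.
rewrite /Bf mulr_sumr -big_split; apply: eq_bigr => k _ /=.
by rewrite qadjD qadjZ mulmxDl mulmxDl -!scalemxAl !mxE.
Qed.

Lemma Bf_addr G x z y (c : C) :
  Bf G y (fun k => x k + c *: z k) = Bf G y x + c * Bf G y z.
Proof.
rewrite /Bf mulr_sumr -big_split; apply: eq_bigr => k _ /=.
by rewrite mulmxDr -!scalemxAr !mxE.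
Qed.

Lemma Bf_sumG (I : finType) (M : I -> 'M[C]_d) x y :
  \sum_m Bf (M m) x y = Bf (\sum_m M m) x y.
Proof.
rewrite /Bf exchange_big; apply: eq_bigr => k _ /=.
rewrite mulmx_sumr mulmx_suml summxE; apply: eq_bigr => m _.
by [].

Qed.

Lemma quad_expand G x z (s : R) : Defs.hermitian G ->
  Re (Bf G (fun k => x k + s%:C *: z k) (fun k => x k + s%:C *: z k)) =
  Re (Bf G x x) + 2 * s * Re (Bf G x z) + s ^+ 2 * Re (Bf G z z).
Proof.
move=> hG; rewrite Bf_addl !Bf_addr cconjC.
rewrite !cReD !cReM !cReC !cImC !mul0r !subr0 cReD cReM cReC cImC mul0r subr0 (@Re_Bf_sym G z x hG). ring.
Qed.

Lemma CS_Re G x y : Defs.hermitian G -> Defs.psd G -> 0 < Re (Bf G y y) ->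
  (Re (Bf G x y)) ^+ 2 / Re (Bf G y y) <= Re (Bf G x x).
Proof.
move=> hG pG q0.
set q := Re (Bf G y y); set b := Re (Bf G x y); set a := Re (Bf G x x).
have h := Re_ge0 (Bf_ge0 (fun k => x k + (- (b / q))%:C *: y k) pG).
rewrite quad_expand // -/a -/b -/q in h.
set s := b / q in h *.
have e : s * q = b by rewrite /s mulfVK // gt_eqF.
have -> : b ^+ 2 / q = s * b by rewrite /s; field; rewrite gt_eqF.
nra.
Qed.

Lemma quad_zero (L Q : R) : 0 <= Q -> (forall s : R, 0 <= 2 * s * L + s ^+ 2 * Q) -> L = 0.
Proof.
move=> hQ h.
set s := L / (Q + 1).
have e : s * (Q + 1) = L by rewrite /s mulfVK // gt_eqF // ltr_wpDl.
have := h (- s); rewrite -e.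
have -> : 2 * - s * (s * (Q + 1)) + (- s) ^+ 2 * Q = - (s ^+ 2 * (Q + 2)) by ring.
rewrite oppr_ge0 => hs.
have h2 : s ^+ 2 * (Q + 2) = 0.
  apply/eqP; rewrite eq_le hs /=; apply: mulr_ge0; [exact: sqr_ge0 | lra].
move/eqP: h2; rewrite mulf_eq0 expf_eq0 /=.
have -> : (Q + 2 == 0) = false by apply/negbTE; rewrite gt_eqF //; lra.
by rewrite orbF => /eqP ->; rewrite mul0r.
Qed.


Definition zf v (a b : 'I_d) (al : C) : 'I_d -> 'cV[C]_d :=
  fun k => ((k == a)%:R * al) *: v b - ((k == b)%:R * conjc al) *: v a.

Lemma sum_delta (a : 'I_d) (F : 'I_d -> C) : \sum_k (k == a)%:R * F k = F a.
Proof.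
rewrite (bigD1 a) //= eqxx mul1r big1 ?addr0 // => k /negbTE ->.
by rewrite mul0r.
Qed.

Lemma conj_nat n : conjc (n%:R : C) = n%:R.
Proof. exact: rmorph_nat. Qed.

Lemma Bf_zl G v y a b al : Bf G (zf v a b al) y =
  conjc al * (adj (v b) *m G *m y a) 0 0 - al * (adj (v a) *m G *m y b) 0 0.
Proof.
rewrite /Bf /zf.
have E : forall k : 'I_d,
   (adj (((k == a)%:R * al) *: v b - ((k == b)%:R * conjc al) *: v a) *m G *m y k) 0 0
   = (k == a)%:R * (conjc al * (adj (v b) *m G *m y k) 0 0)
     - (k == b)%:R * (al * (adj (v a) *m G *m y k) 0 0).
  move=> k; rewrite qadjD qadjN !qadjZ !rmorphM /= conjcK !conj_nat.
  by rewrite mulmxDl mulmxDl !mulNmx -!scalemxAl !mxE !mulrA.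
rewrite (eq_bigr _ (fun k _ => E k)).
by rewrite sumrB !sum_delta.
Qed.

Lemma Bf_zr G v y a b al : Bf G y (zf v a b al) =
  al * (adj (y a) *m G *m v b) 0 0 - conjc al * (adj (y b) *m G *m v a) 0 0.
Proof.
rewrite /Bf /zf.
have E : forall k : 'I_d,
   (adj (y k) *m G *m (((k == a)%:R * al) *: v b - ((k == b)%:R * conjc al) *: v a)) 0 0
   = (k == a)%:R * (al * (adj (y k) *m G *m v b) 0 0)
     - (k == b)%:R * (conjc al * (adj (y k) *m G *m v a) 0 0).
  move=> k; rewrite mulmxDr mulmxN -!scalemxAr !mxE !mulrA.
  by [].
rewrite (eq_bigr _ (fun k _ => E k)) sumrB.
rewrite (sum_delta a (fun k => al * (adj (y k) *m G *m v b) 0 0)).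
by rewrite (sum_delta b (fun k => conjc al * (adj (y k) *m G *m v a) 0 0)).
Qed.

Lemma Re_Bf_zv G v a b al : Defs.hermitian G -> Re (Bf G (zf v a b al) v) = 0.
Proof.
move=> hG; rewrite Bf_zl -(entry_conj1 (v b) _ hG).
set T := (adj (v b) *m G *m v a) 0 0.
have -> : al * conjc T = conjc (conjc al * T) by rewrite rmorphM /= conjcK.
by rewrite cReD cReN cReJ subrr.
Qed.

Lemma psd_trivial_entry n (x : 'cV[C]_n) : 0 <= (adj x *m x) 0 0.
Proof.
rewrite !mxE; apply: sumr_ge0 => i _; rewrite qadjE mulrC.
exact: mulcJ_ge0.
Qed.

Lemma herm1 : Defs.hermitian (1%:M : 'M[C]_d).
Proof.
by rewrite /Defs.hermitian; apply/matrixP => i j; rewrite qadjE !mxE rmorph_nat eq_sym.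
Qed.

Lemma psd1 : Defs.psd (1%:M : 'M[C]_d).
Proof. by move=> x; rewrite mulmx1; apply: psd_trivial_entry. Qed.

Lemma fisher_bound (I : finType) (M : I -> 'M[C]_d) v u a b al (s : R) :
  povm M ->
  \sum_(m | 0 < Re (Bf (M m) v v))
     (Re (Bf (M m) v v))^-1 * (Re (Bf (M m) v u + Bf (M m) u v)) ^+ 2 <=
  4 * Re (Bf 1%:M (fun k => u k + s%:C *: zf v a b al k) (fun k => u k + s%:C *: zf v a b al k)).
Proof.
move=> [hM hS].
set Phi := (fun k => u k + s%:C *: zf v a b al k).
apply: (@le_trans _ _ (\sum_(m | 0 < Re (Bf (M m) v v)) 4 * Re (Bf (M m) Phi Phi))).
  apply: ler_sum => m hm.
  have hG := (hM m).1; have pG := (hM m).2.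
  have e : Re (Bf (M m) v u + Bf (M m) u v) = 2 * Re (Bf (M m) Phi v).
    have e2 : Re (Bf (M m) Phi v) = Re (Bf (M m) u v).
      rewrite /Phi Bf_addl cconjC cReD cReM cReC cImC mul0r subr0.
      by rewrite (Re_Bf_zv _ _ _ _ hG) mulr0 addr0.
    rewrite e2 cReD (@Re_Bf_sym _ v u hG); ring.
  have := CS_Re Phi hG pG hm.
  rewrite e; move: (Re (Bf (M m) Phi v)) => r.
  have -> : (Re (Bf (M m) v v))^-1 * (2 * r) ^+ 2 = 4 * (r ^+ 2 / Re (Bf (M m) v v)).
    by field; rewrite gt_eqF.
  by move=> h; rewrite ler_pM2l // ltr0n.
rewrite big_mkcond /=.
apply: (@le_trans _ _ (\sum_m 4 * Re (Bf (M m) Phi Phi))).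
  apply: ler_sum => m _; case: ifP => // _.
  by apply: mulr_ge0 => //; apply: Re_ge0; apply: Bf_ge0; exact: (hM m).2.
by rewrite -mulr_sumr -cRe_sum Bf_sumG hS.
Qed.

Lemma gauge_zero u z :
  (forall s : R, Re (Bf 1%:M u u) <=
     Re (Bf 1%:M (fun k => u k + s%:C *: z k) (fun k => u k + s%:C *: z k))) ->
  Re (Bf 1%:M u z) = 0.
Proof.
move=> h; apply: (quad_zero (Q := Re (Bf 1%:M z z))).
  by apply: Re_ge0; apply: Bf_ge0; exact: psd1.
move=> s; have := h s; rewrite quad_expand; last exact: herm1.
lra.
Qed.

Lemma X_rel u v a b : (forall al, Re (Bf 1%:M u (zf v a b al)) = 0) ->
  (adj (u a) *m v b) 0 0 = conjc ((adj (u b) *m v a) 0 0).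
Proof.
move=> h; have h1 := h 1; have h2 := h (Complex 0 1).
rewrite Bf_zr !mulmx1 in h1; rewrite Bf_zr !mulmx1 in h2.
move: h1 h2; rewrite rmorph1 !mul1r.
case: ((adj (u a) *m v b) 0 0) => x1 y1; case: ((adj (u b) *m v a) 0 0) => x2 y2.
move=> /= h1 h2; apply/eqP; rewrite eq_complex /=; apply/andP; split; apply/eqP.
  lra.
move: h2; rewrite /= !mul0r !mul1r !sub0r mulN1r opprK => h2; lra.
Qed.

End Alg.

End QB.
Import QB.

Lemma tr1 (R : realType) (A : 'M[R[i]]_1) : \tr A = A 0 0.
Proof. by rewrite /mxtrace big_ord1. Qed.

Lemma entry11 (R : realType) n (A : 'M[R[i]]_(1, n)) (B : 'M[R[i]]_(n, 1)) :
  \tr (B *m A) = (A *m B) 0 0.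
Proof. by rewrite mxtrace_mulC tr1. Qed.

Lemma Xexp (R : realType) n (a b c : R[i]) (x y z : 'cV[R[i]]_n) :
  (adj (a *: x + b *: y) *m (c *: z)) 0 0 =
  conjc a * c * (adj x *m z) 0 0 + conjc b * c * (adj y *m z) 0 0.
Proof.
rewrite qadjD !qadjZ mulmxDl -!scalemxAl -!scalemxAr !mxE.
by rewrite !mulrA [conjc a * c]mulrC [conjc b * c]mulrC.
Qed.

Lemma mul11 (R : realType) (A B : 'M[R[i]]_1) : (A *m B) 0 0 = A 0 0 * B 0 0.
Proof. by rewrite mxE big_ord1. Qed.

Lemma add00 (R : realType) (A B : 'M[R[i]]_1) : (A + B) 0 0 = A 0 0 + B 0 0.
Proof. by rewrite mxE. Qed.
Lemma zero00 (R : realType) : (0 : 'M[R[i]]_1) 0 0 = 0.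
Proof. by rewrite mxE. Qed.
Lemma scalar00 (R : realType) (c : R[i]) : (c%:M : 'M[R[i]]_1) 0 0 = c.
Proof. by rewrite mxE. Qed.

Lemma conj_real_im (R : realType) (z : R[i]) : complex.Im z = 0 -> conjc z = z.
Proof. by case: z => a b /= ->; rewrite oppr0. Qed.

Lemma cjD (R : realType) (a b : R[i]) : conjc (a + b) = conjc a + conjc b.
Proof. by case: a => a1 a2; case: b => b1 b2 /=; rewrite opprD. Qed.
Lemma cjM (R : realType) (a b : R[i]) : conjc (a * b) = conjc a * conjc b.
Proof.
case: a => a1 a2; case: b => b1 b2 /=; apply/eqP; rewrite eq_complex /=.
apply/andP; split; apply/eqP; ring.
Qed.

Lemma density_pure (R : realType) d (psi0 : 'cV[R[i]]_d) :
  adj psi0 *m psi0 = 1%:M -> Defs.density (psi0 *m adj psi0).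
Proof.
move=> h; split; [|split].
- by rewrite /Defs.hermitian qadjM qadjK.
- move=> x; rewrite !mulmxA -(mulmxA (adj x *m psi0)) mul11.
  rewrite -[adj x *m psi0](qadjK) qadjM qadjK.
  rewrite -conj_entry mulrC; exact: mulcJ_ge0.
- by rewrite mxtrace_mulC h tr1 mxE.
Qed.

Lemma cV_eq0 (R : realType) d (x : 'cV[R[i]]_d) (q : R) :
  q%:C = (adj x *m x) 0 0 -> q <= 0 -> x = 0.
Proof.
move=> hq hq0.
have hs : \sum_i (conjc (x i 0) * x i 0) = 0.
  apply/eqP; rewrite eq_le; apply/andP; split.
    have -> : \sum_i (conjc (x i 0) * x i 0) = (adj x *m x) 0 0.
      by rewrite mxE; apply: eq_bigr => i _; rewrite qadjE.
    by rewrite -hq lecR.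
  by apply: sumr_ge0 => i _; rewrite mulrC; exact: mulcJ_ge0.
apply/matrixP => i j; rewrite ord1 mxE.
have ge : forall i : 'I_d, true -> 0 <= conjc (x i 0) * x i 0.
  by move=> i' _; rewrite mulrC; exact: mulcJ_ge0.
move: (psumr_eq0P ge hs) => /(_ i isT) /eqP.
rewrite mulf_eq0 => /orP[|/eqP //].
move=> /eqP h; by rewrite -[x i 0]conjcK h rmorph0.
Qed.
Theorem theorem1 (R : realType) (d K : nat)
  (* the channel, given by differentiable Kraus operators E_k(theta) *)
  (E : R -> 'I_K -> 'M[R[i]]_d)
  (hE_diff : forall (k : 'I_K) (t : R), mx_derivable (fun s => E s k) t)
  (hE_tp : forall t : R, trace_preserving (E t))
  (* pure input state rho0 = |psi0><psi0| *)
  (psi0 : 'cV[R[i]]_d) (hpsi0 : adj psi0 *m psi0 = 1%:M)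
  (* canonical Kraus operators Ups_1..Ups_d: a differentiable Kraus
     representation of the same channel *)
  (Ups : R -> 'I_d -> 'M[R[i]]_d)
  (hUps_diff : forall (k : 'I_d) (t : R), mx_derivable (fun s => Ups s k) t)
  (hUps_same : forall (t : R) (rho : 'M[R[i]]_d),
      density rho -> kraus_apply (Ups t) rho = kraus_apply (E t) rho)
  (p : R -> 'I_d -> R)
  (hUps_canon : forall (t : R) (j k : 'I_d),
      \tr (Ups t k *m (psi0 *m adj psi0) *m adj (Ups t j))
      = (j == k)%:R * (p t k)%:C)
  (* the differentiable orthonormal eigenbasis |w_k(theta)> *)
  (w : R -> 'I_d -> 'cV[R[i]]_d)
  (hw_on : forall (t : R) (j k : 'I_d), adj (w t j) *m w t k = (j == k)%:R%:M)
  (hw_diff : forall (k : 'I_d) (t : R), mx_derivable (fun s => w s k) t)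
  (hw_def : forall (t : R) (k : 'I_d), 0 < p t k ->
      w t k = ((Num.sqrt (p t k))^-1)%:C *: (Ups t k *m psi0))
  (* a parameter value and a POVM attaining the Sarovar--Milburn bound *)
  (theta : R) (I : finType) (M : I -> 'M[R[i]]_d) (hM : povm M)
  (hatt : fisher_info (fun t => kraus_apply (E t) (psi0 *m adj psi0)) M theta
          = C_Ups Ups (psi0 *m adj psi0) theta) :
  forall j k : 'I_d, 0 < p theta j -> 0 < p theta k ->
    (adj (mx_derive (fun s => w s j) theta) *m w theta k) 0 0 = 0.
Proof.
move=> j k hj hk.
set rho0 := psi0 *m adj psi0.
have hdens : Defs.density rho0 by apply: density_pure.
pose v t l := Ups t l *m psi0.
have hrho : forall t, kraus_apply (E t) rho0 = \sum_l v t l *m adj (v t l).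
  move=> t; rewrite -hUps_same //; apply: eq_bigr => l _.
  by rewrite /v /rho0 qadjM !mulmxA.
have hprob : forall m, outcome_prob (fun t => kraus_apply (E t) rho0) M m =
    fun t => complex.Re (Bf (M m) (v t) (v t)).
  move=> m; apply: funext => t; rewrite /outcome_prob hrho mulmx_suml.
  have -> : \tr (\sum_l v t l *m adj (v t l) *m M m) = Bf (M m) (v t) (v t); last by [].
  rewrite /mxtrace (eq_bigr _ (fun i _ => summxE _ _ _ i i)) exchange_big /Bf.
  apply: eq_bigr => l _.
  by rewrite -mulmxA -/(mxtrace _) entry11 mulmxA.
pose u l := mx_derive (fun s => Ups s l) theta *m psi0.
have hv : forall l, mder (fun s => v s l) theta (u l).
  move=> l; have := mder_mul (mder_derivable (hUps_diff l theta)) (mder_cst psi0 theta).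
  by rewrite mulmx0 addr0.
have hP : forall m, cder (fun t => Bf (M m) (v t) (v t)) theta
    (Bf (M m) (v theta) u + Bf (M m) u (v theta)).
  move=> m; rewrite /Bf -big_split; apply: cder_sum => l.
  have := mder_mul (mder_mul (mder_adj (hv l)) (mder_cst (M m) theta)) (hv l) 0 0.
  by rewrite mulmx0 addr0 mxE addrC.
have hderiv : forall m, derive1 (outcome_prob (fun t => kraus_apply (E t) rho0) M m) theta
    = complex.Re (Bf (M m) (v theta) u + Bf (M m) u (v theta)).
  by move=> m; rewrite hprob derive1E (@derive_val _ _ _ _ _ _ _ (hP m).1).
have hC : C_Ups Ups rho0 theta = 4 * complex.Re (Bf 1%:M u u).
  rewrite /C_Ups /Bf cRe_sum; congr (4 * _); apply: eq_bigr => l _.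
  by rewrite mulmx1 /rho0 /u -entry11 qadjM !mulmxA.
have hF : fisher_info (fun t => kraus_apply (E t) rho0) M theta =
    \sum_(m | 0 < complex.Re (Bf (M m) (v theta) (v theta)))
      (complex.Re (Bf (M m) (v theta) (v theta)))^-1 *
      (complex.Re (Bf (M m) (v theta) u + Bf (M m) u (v theta))) ^+ 2.
  rewrite /fisher_info (eq_bigl (fun m => 0 < complex.Re (Bf (M m) (v theta) (v theta)))); last first.
    by move=> m; rewrite hprob.
  by apply: eq_bigr => m _; rewrite hderiv hprob.
have hgauge : forall a b al, complex.Re (Bf 1%:M u (zf (v theta) a b al)) = 0.
  move=> a b al; apply: gauge_zero => s.
  have := fisher_bound (v theta) u a b al s hM.
  rewrite -hF hatt hC; lra.
have hX : forall a b, (adj (u a) *m v theta b) 0 0 = conjc ((adj (u b) *m v theta a) 0 0).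
  by move=> a b; apply: X_rel => al; apply: hgauge.
have hpv : forall t l, (p t l)%:C = (adj (v t l) *m v t l) 0 0.
  move=> t l; have := hUps_canon t l l; rewrite eqxx mul1r => <-.
  by rewrite /rho0 /v -entry11 qadjM !mulmxA.
pose sg l t := (complex.Re ((adj (w t l) *m v t l) 0 0))%:C.
have hsgpos : forall t l, 0 < p t l -> (sg l t = (Num.sqrt (p t l))%:C) /\ (v t l = (Num.sqrt (p t l))%:C *: w t l).
  move=> t l hp.
  have sq0 : Num.sqrt (p t l) != 0 by rewrite gt_eqF // sqrtr_gt0.
  have ev : v t l = (Num.sqrt (p t l))%:C *: w t l.
    rewrite (hw_def t l hp) scalerA -rmorphM /= divff // scale1r.
    by [].
  split => //.
  by rewrite /sg ev -scalemxAr mxE (hw_on t l l) eqxx mxE /= mulr1 mul0r subr0.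
have hvsg : forall t l, v t l = sg l t *: w t l.
  move=> t l; case: (ltrP 0 (p t l)) => hp.
    by case: (hsgpos t l hp) => -> ->.
  have v0 := cV_eq0 _ _ _ _ (hpv t l) hp.
  rewrite /sg v0 mulmx0 mxE (_ : (complex.Re 0)%:C = 0) //.
  by rewrite scale0r.
pose w' l := mx_derive (fun s => w s l) theta.
have hw : forall l, mder (fun s => w s l) theta (w' l).
  by move=> l; apply: mder_derivable.
pose sg' l := (complex.Re ((adj (w' l) *m v theta l + adj (w theta l) *m u l) 0 0))%:C.
have hsgd : forall l, cder (sg l) theta (sg' l).
  by move=> l; apply: cder_Re; apply: (mder_mul (mder_adj (hw l)) (hv l)).
have hu : forall l, u l = sg' l *: w theta l + sg l theta *: w' l.
  move=> l; apply: (mder_uniq (hv l)).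
  by apply: (mder_ext _ (mder_scale (hsgd l) (hw l))) => s; rewrite -hvsg.
have horth : forall a b, (adj (w' a) *m w theta b) 0 0 + (adj (w theta a) *m w' b) 0 0 = 0.
  move=> a b.
  have h1 := mder_mul (mder_adj (hw a)) (hw b).
  have h2 : mder (fun s => adj (w s a) *m w s b) theta 0.
    by apply: (mder_ext _ (mder_cst ((a == b)%:R%:M) theta)) => s; rewrite hw_on.
  have := congr1 (fun A : 'M[R[i]]_1 => A 0 0) (mder_uniq h1 h2).
  by rewrite /= add00 zero00.
have e := hX j k.
rewrite !hu (hvsg theta k) (hvsg theta j) !Xexp (hw_on theta j k) (hw_on theta k j) !scalar00 in e.
have rsg : forall l t, conjc (sg l t) = sg l t by move=> l t; apply: conj_real_im.
have rsg' : forall l, conjc (sg' l) = sg' l by move=> l; apply: conj_real_im.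
rewrite !cjD !cjM !rsg !rsg' conj_nat entry_conj0 in e.
change ((adj (w' j) *m w theta k) 0 0 = 0).
set Y := (adj (w' j) *m w theta k) 0 0.
set Z := (adj (w theta j) *m w' k) 0 0.
have hYZ : sg j theta * sg k theta * (Y - Z) = 0.
  case: (eqVneq j k) => [ejk | njk].
    move: e; rewrite /Y /Z -!ejk eqxx => /addrI e.
    by rewrite mulrBr e subrr.
  move: e; rewrite (negbTE njk) eq_sym (negbTE njk) !mulr0 !add0r.
  by rewrite [sg k theta * _]mulrC => e; rewrite mulrBr e subrr.
have hZ : Z = - Y.
  move: (horth j k); rewrite -/Y -/Z => h.
  by apply/eqP; rewrite -addr_eq0 addrC h.
have nz : forall l, 0 < p theta l -> sg l theta != 0.
  move=> l hl; case: (hsgpos theta l hl) => -> _.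
  apply/negP => /eqP h; have := congr1 (@complex.Re R) h => /= h0.
  by move: (sqrtr_gt0 (p theta l)); rewrite hl h0 ltxx.
move: hYZ; rewrite hZ opprK -mulr2n; move/eqP; rewrite !mulf_eq0 (negbTE (nz _ hj)) (negbTE (nz _ hk)) /=.
by rewrite mulrn_eq0 /= => /eqP.
Qed.
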